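(* Let $\varepsilon=1+\sqrt2$, $K=\mathbb Q(\sqrt2)$, $\sigma$ its nontrivial Galois automorphism, and let $$\Gamma(2,5)=\left\{\begin{pmatrix}x_0+x_1\sqrt2&\sqrt5(x_2+x_3\sqrt2)\\ \sqrt5(x_2-x_3\sqrt2)&x_0-x_1\sqrt2\end{pmatrix}\in\mathrm{SL}_2(\mathbb R):\ x_i\in\mathbb Z\right\},\qquad H=\left\langle\begin{pmatrix}\varepsilon^2&0\\0&\varepsilon^{-2}\end{pmatrix}\right\rangle.$$ For $\gamma\in\Gamma(2,5)$ put $z_1(\gamma)=x_0+x_1\sqrt2$, $z_2(\gamma)=x_2+x_3\sqrt2\in\mathcal O_K$. Let $n\in\mathbb N$. Consider the set of double cosets $[\gamma]=H\gamma H$ whose elements $\gamma=\begin{pmatrix}a&b\\c&d\end{pmatrix}$ have all four entries nonzero and of the same sign (i.e. $\delta_1(\gamma)=\delta_2(\gamma)=0$) and satisfy $bc=5n$, modulo the identification $[\gamma]\sim[-\gamma]$. Then the map $$\psi:[\gamma]\longmapsto(|z_1(\gamma)|,\ |z_2(\gamma)|)\in D_K(5n+1)\times D_K(n)$$ is well defined, two-to-one, and surjective.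
   Context: For $z\in\mathcal O_K$, $|z|$ denotes the real absolute value of $z\in\mathbb R$ (so $|z|=\pm z$). For $m\in\mathbb N$, $D_K(m)$ is the set of totally positive $z\in\mathcal O_K$ (i.e. $z>0$ and $\sigma(z)>0$) with $z\,\sigma(z)=m$, modulo the equivalence $z\sim z'$ iff $z=\varepsilon^{2k}z'$ for some $k\in\mathbb Z$. *)

(* Defs.v *)
From mathcomp Require Import all_boot all_order all_algebra.
From mathcomp Require Import reals.
Set Implicit Arguments. Unset Strict Implicit. Unset Printing Implicit Defensive.
Import Order.TTheory GRing.Theory Num.Theory.
Local Open Scope ring_scope.

(* O_K = Z[sqrt 2], an element x0 + x1 sqrt2 is represented by the pair (x0, x1). *)
Definition OK := (int * int)%type.

Definition sigmaK (z : OK) : OK := (z.1, - z.2).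

Section Defs.
Variable R : realType.

Definition s2 : R := Num.sqrt 2.
Definition s5 : R := Num.sqrt 5.

Definition emb (z : OK) : R := z.1%:~R + z.2%:~R * s2.

Definition epsR : R := 1 + s2.

Definition absK (z : OK) : OK := if 0 <= emb z then z else (- z.1, - z.2).

Definition totpos (z : OK) : Prop := 0 < emb z /\ 0 < emb (sigmaK z).

(* z is a representative of an element of D_K(m) *)
Definition inD (m : nat) (z : OK) : Prop :=
  totpos z /\ emb z * emb (sigmaK z) = m%:R.

(* equivalence defining D_K(m): z ~ z' iff z = eps^(2k) z' for some k in Z *)
Definition eqD (z z' : OK) : Prop := exists k : int, emb z = epsR ^ (2 * k) * emb z'.

Definition eqDD (p q : OK * OK) : Prop := eqD p.1 q.1 /\ eqD p.2 q.2.

Definition mx2 (a b c d : R) : 'M[R]_2 :=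
  \matrix_(i < 2, j < 2)
    if i == ord0 then (if j == ord0 then a else b) else (if j == ord0 then c else d).

(* an integer vector x = ((x0,x1),(x2,x3)) = (z1, z2) and the associated matrix
   [ x0+x1 s2 , s5 (x2 + x3 s2) ; s5 (x2 - x3 s2) , x0 - x1 s2 ] *)
Definition gam (x : OK * OK) : 'M[R]_2 :=
  mx2 (emb x.1) (s5 * emb x.2) (s5 * emb (sigmaK x.2)) (emb (sigmaK x.1)).

Definition inGamma (x : OK * OK) : Prop := \det (gam x) = 1.

Definition hmat (j : int) : 'M[R]_2 := mx2 (epsR ^ (2 * j)) 0 0 (epsR ^ (- (2 * j))).

Definition admissible (n : nat) (x : OK * OK) : Prop :=
  let g := gam x in
  let a := g ord0 ord0 in let b := g ord0 ord_max in
  let c := g ord_max ord0 in let d := g ord_max ord_max in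
  [/\ inGamma x,
      (0 < a /\ 0 < b /\ 0 < c /\ 0 < d) \/ (a < 0 /\ b < 0 /\ c < 0 /\ d < 0)
    & b * c = (5 * n)%:R].

Definition equivG (x y : OK * OK) : Prop :=
  exists (j k : int) (s : bool), gam y = (-1) ^+ s *: (hmat j *m gam x *m hmat k).

Definition psi (x : OK * OK) : OK * OK := (absK x.1, absK x.2).

End Defs.

(* Main.v *)
Require Import Defs.
From mathcomp Require Import all_boot all_order all_algebra.
From mathcomp Require Import reals.
From mathcomp Require Import ring lra zify.
Import Order.TTheory GRing.Theory Num.Theory.
Local Open Scope ring_scope.

Section S.
Variable R : realType.
Local Notation P := (fun m : int => epsR R ^ m).
Local Notation e1 := (emb R).
Local Notation e2 := (fun z => emb R (sigmaK z)).

Lemma s2sq : s2 R ^+ 2 = 2. Proof. by rewrite /s2 sqr_sqrtr // ler0n. Qed.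
Lemma s5sq : s5 R ^+ 2 = 5. Proof. by rewrite /s5 sqr_sqrtr // ler0n. Qed.
Lemma s2gt0 : 0 < s2 R. Proof. by rewrite /s2 sqrtr_gt0 ltr0n. Qed.
Lemma s5gt0 : 0 < s5 R. Proof. by rewrite /s5 sqrtr_gt0 ltr0n. Qed.
Lemma eps_gt1 : 1 < epsR R. Proof. rewrite /epsR; have := s2gt0; lra. Qed.
Lemma eps_neq0 : epsR R != 0. Proof. rewrite gt_eqF //; have := eps_gt1; lra. Qed.
Lemma PD m k : P (m + k) = P m * P k. Proof. exact: expfzDr eps_neq0. Qed.
Lemma P0 : P 0 = 1. Proof. by []. Qed.
Lemma Pgt0 m : 0 < P m. Proof. apply: exprz_gt0; have := eps_gt1; lra. Qed.
Lemma Pinj m k : P m = P k -> m = k.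
Proof. have h := eps_gt1; apply: ieexprIz; [lra | rewrite gt_eqF //]. Qed.
Lemma PN m : P (- m) * P m = 1. Proof. by rewrite -PD addNr. Qed.
Lemma sgsq (s : bool) : (-1) ^+ s * (-1) ^+ s = 1 :> R.
Proof. by case: s; rewrite ?expr1 ?expr0 ?mulr1 ?mulrNN ?mulr1. Qed.

Lemma mx2E00 (a b c d : R) : mx2 a b c d ord0 ord0 = a. Proof. by rewrite mxE. Qed.
Lemma mx2E01 (a b c d : R) : mx2 a b c d ord0 ord_max = b. Proof. by rewrite mxE. Qed.
Lemma mx2E10 (a b c d : R) : mx2 a b c d ord_max ord0 = c. Proof. by rewrite mxE. Qed.
Lemma mx2E11 (a b c d : R) : mx2 a b c d ord_max ord_max = d. Proof. by rewrite mxE. Qed.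

Lemma det_mx2 (a b c d : R) : \det (mx2 a b c d) = a * d - b * c.
Proof.
rewrite (expand_det_row _ ord0) !big_ord_recl big_ord0 /cofactor !det_mx11 !mxE /=.
rewrite expr0 expr1; ring.
Qed.

Lemma mx2_mul (a b c d a' b' c' d' : R) :
  mx2 a b c d *m mx2 a' b' c' d' = mx2 (a*a' + b*c') (a*b' + b*d') (c*a'+d*c') (c*b'+d*d').
Proof.
apply/matrixP => i j; rewrite !mxE !big_ord_recl big_ord0 !mxE /=.
case: i => [[|[|//]] ?]; case: j => [[|[|//]] ?] /=; ring.
Qed.

Lemma mx2_scale (t a b c d : R) : t *: mx2 a b c d = mx2 (t * a) (t * b) (t * c) (t * d).
Proof.
apply/matrixP => i j; rewrite !mxE.
by case: i => [[|[|//]] ?]; case: j => [[|[|//]] ?].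
Qed.

Lemma mx2_inj (a b c d a' b' c' d' : R) :
  mx2 a b c d = mx2 a' b' c' d' -> [/\ a = a', b = b', c = c' & d = d'].
Proof.
move=> h; split.
- by have := congr1 (fun M : 'M[R]_2 => M ord0 ord0) h; rewrite !mx2E00.
- by have := congr1 (fun M : 'M[R]_2 => M ord0 ord_max) h; rewrite !mx2E01.
- by have := congr1 (fun M : 'M[R]_2 => M ord_max ord0) h; rewrite !mx2E10.
- by have := congr1 (fun M : 'M[R]_2 => M ord_max ord_max) h; rewrite !mx2E11.
Qed.

Lemma hGh j k (x : OK * OK) :
  hmat R j *m gam R x *m hmat R k =
  mx2 (P (2 * j) * e1 x.1 * P (2 * k)) (P (2 * j) * (s5 R * e1 x.2) * P (- (2 * k)))
      (P (- (2 * j)) * (s5 R * e2 x.2) * P (2 * k)) (P (- (2 * j)) * e2 x.1 * P (- (2 * k))).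
Proof.
rewrite /hmat /gam !mx2_mul; congr mx2; ring.
Qed.

Lemma embN (z : OK) : e1 (- z.1, - z.2) = - e1 z.
Proof. rewrite /emb /= !mulrNz; ring. Qed.
Lemma embsN (z : OK) : e2 (- z.1, - z.2) = - e2 z.
Proof. rewrite /emb /sigmaK /= !mulrNz; ring. Qed.

Lemma absK_emb (z : OK) : e1 (absK R z) = `|e1 z|.
Proof.
rewrite /absK; case: ifP => h; first by rewrite ger0_norm.
by rewrite embN ltr0_norm // ltNge h.
Qed.


Lemma s5neq0 : s5 R != 0. Proof. by rewrite gt_eqF // s5gt0. Qed.

Lemma adm_facts n x : admissible R n x ->
  e1 x.1 * e2 x.1 = (5 * n + 1)%:R /\ e1 x.2 * e2 x.2 = n%:R /\
  ((0 < e1 x.1 /\ 0 < e2 x.1 /\ 0 < e1 x.2 /\ 0 < e2 x.2) \/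
   (e1 x.1 < 0 /\ e2 x.1 < 0 /\ e1 x.2 < 0 /\ e2 x.2 < 0)).
Proof.
case; rewrite /inGamma /gam det_mx2 !mx2E00 !mx2E01 !mx2E10 !mx2E11 => hdet hs hbc.
have h5 := s5gt0.
have hn : e1 x.2 * e2 x.2 = n%:R.
  apply: (mulfI (_ : (5:R) != 0)); first by rewrite pnatr_eq0.
  rewrite -natrM -hbc; ring: s5sq.
split; last split => //.
  rewrite natrD -hbc; lra.
case: hs => [[p1 [p2 [p3 p4]]]|[p1 [p2 [p3 p4]]]]; [left|right].
  by rewrite (pmulr_rgt0 _ h5) in p2; rewrite (pmulr_rgt0 _ h5) in p3.
by rewrite (pmulr_rlt0 _ h5) in p2; rewrite (pmulr_rlt0 _ h5) in p3.
Qed.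

Lemma adm_intro n (u v : OK) : totpos R u -> totpos R v ->
  e1 u * e2 u = (5 * n + 1)%:R -> e1 v * e2 v = n%:R -> admissible R n (u, v).
Proof.
case=> hu1 hu2 [hv1 hv2] hu hv; have h5 := s5gt0.
split; rewrite /inGamma /gam ?det_mx2 ?mx2E00 ?mx2E01 ?mx2E10 ?mx2E11 /=.
- rewrite hu natrD natrM; ring: s5sq hv.
- by left; rewrite !pmulr_rgt0.
- rewrite natrM; ring: s5sq hv.
Qed.

Lemma inD_abs m (z : OK) : (0 < e1 z /\ 0 < e2 z) \/ (e1 z < 0 /\ e2 z < 0) ->
  e1 z * e2 z = m%:R -> inD R m (absK R z).
Proof.
rewrite /inD /totpos /absK => -[[h1 h2]|[h1 h2]] hm.
  by rewrite ifT ?(ltW h1).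
rewrite ifF; last by rewrite leNgt h1.
rewrite embN embsN mulrNN; split => //; split; lra.
Qed.

Lemma part1 n x : admissible R n x ->
  inD R (5 * n + 1) (psi R x).1 /\ inD R n (psi R x).2.
Proof.
move/adm_facts=> [h1 [h2 hs]]; split; apply: inD_abs => //;
case: hs => [[?[?[??]]]|[?[?[??]]]]; by [left|right].
Qed.

Lemma Pc3 a b c X : a + b + c = 0 -> P a * (P b * X * P c) = X.
Proof.
move=> h; transitivity (P (a + b + c) * X); first by rewrite !PD; ring.
by rewrite h P0 mul1r.
Qed.

Lemma normsg (s : bool) : `|(-1) ^+ s : R| = 1.
Proof. by case: s; rewrite ?expr1 ?expr0 ?normrN normr1. Qed.

Lemma part2 x y : equivG R x y -> eqDD R (psi R x) (psi R y).
Proof.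
case=> j [k [s]]; rewrite hGh mx2_scale /gam => /mx2_inj [h1 h2 _ _].
split; rewrite /= /eqD !absK_emb.
- exists (-(j + k)); rewrite h1 !normrM normsg mul1r !(ger0_norm (ltW (Pgt0 _))).
  by rewrite Pc3 //; lia.
- have h2' : e1 y.2 = (-1) ^+ s * (P (2 * j) * e1 x.2 * P (- (2 * k))).
    by apply: (mulfI s5neq0); rewrite h2; ring.
  exists (k - j); rewrite h2' !normrM normsg mul1r !(ger0_norm (ltW (Pgt0 _))).
  by rewrite Pc3 //; lia.
Qed.

Lemma conj_rel (y x : OK) (s : bool) p : e1 y * e2 y = e1 x * e2 x ->
  e1 y = (-1) ^+ s * P p * e1 x -> e1 x != 0 -> e2 y = (-1) ^+ s * P (- p) * e2 x.
Proof.
move=> hN hy hx.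
have h : (-1) ^+ s * P p * e2 y = e2 x.
  by apply: (mulfI hx); rewrite -hN hy; ring.
rewrite -h; transitivity (((-1) ^+ s * (-1) ^+ s) * (P (- p) * P p) * e2 y).
  by rewrite sgsq PN !mul1r.
ring.
Qed.

Lemma ent1 (s : bool) p1 p2 p3 (X : R) : p1 + p2 + p3 = 0 ->
  X = (-1) ^+ s * (P p1 * ((-1) ^+ s * P p2 * X) * P p3).
Proof.
move=> h; transitivity (((-1) ^+ s * (-1) ^+ s) * P (p1 + p2 + p3) * X);
  last by rewrite !PD; ring.
by rewrite sgsq h P0 !mul1r.
Qed.

Lemma ent (s : bool) p1 p2 p3 (c X : R) : p1 + p2 + p3 = 0 ->
  c * X = (-1) ^+ s * (P p1 * (c * ((-1) ^+ s * P p2 * X)) * P p3).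
Proof.
move=> h; transitivity (((-1) ^+ s * (-1) ^+ s) * P (p1 + p2 + p3) * (c * X));
  last by rewrite !PD; ring.
by rewrite sgsq h P0 !mul1r.
Qed.

Lemma equiv_of (y x : OK * OK) (s : bool) (a b m : int) :
  e1 y.1 = (-1) ^+ s * P (2 * a) * e1 x.1 ->
  e2 y.1 = (-1) ^+ s * P (- (2 * a)) * e2 x.1 ->
  e1 y.2 = (-1) ^+ s * P (2 * b) * e1 x.2 ->
  e2 y.2 = (-1) ^+ s * P (- (2 * b)) * e2 x.2 ->
  a - b = 2 * m -> equivG R y x.
Proof.
move=> h1 h2 h3 h4 hab; exists (-(b + m)), (- m), s.
rewrite hGh mx2_scale /gam h1 h2 h3 h4; congr mx2.
- by apply: ent1; lia.
- by apply: ent; lia.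
- by apply: ent; lia.
- by apply: ent1; lia.
Qed.

Lemma par (d : int) : exists m : int, d = 2 * m \/ d = 2 * m + 1.
Proof.
exists (d %/ 2)%Z. have := divz_eq d 2. have := modz_ge0 d (isT : (2:int) != 0).
have := ltz_pmod d (isT : (0:int) < 2). lia.
Qed.

End S.

Lemma Psh1 (R : realType) (b : int) : epsR R ^ (2 * b) = epsR R ^ (2 * (b - 1)) * epsR R ^ 2.
Proof. by rewrite -PD; congr (_ ^ _); lia. Qed.
Lemma Psh2 (R : realType) (b : int) : epsR R ^ (- (2 * b)) = epsR R ^ (- (2 * (b - 1))) * epsR R ^ (-2).
Proof. by rewrite -PD; congr (_ ^ _); lia. Qed.
Lemma intsh (a b m : int) : a - b = 2 * m + 1 -> a - (b - 1) = 2 * (m + 1).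
Proof. lia. Qed.
Lemma intc (j k : int) : 2 * j + 2 * k = 0 -> 2 = 2 * j + - (2 * k) -> False.
Proof. lia. Qed.

Theorem theorem4p11 (R : realType) (n : nat) :
  (* psi lands in D_K(5n+1) x D_K(n) *)
  (forall x : OK * OK, admissible R n x ->
     inD R (5 * n + 1) (psi R x).1 /\ inD R n (psi R x).2) /\
  (* psi is well defined on classes *)
  (forall x y : OK * OK, admissible R n x -> admissible R n y ->
     equivG R x y -> eqDD R (psi R x) (psi R y)) /\
  (* surjective *)
  (forall u v : OK, inD R (5 * n + 1) u -> inD R n v ->
     exists x, admissible R n x /\ eqDD R (psi R x) (u, v)) /\
  (* two-to-one: every fibre consists of exactly two classes *)
  (forall u v : OK, inD R (5 * n + 1) u -> inD R n v ->
     exists x1 x2 : OK * OK,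
       admissible R n x1 /\ admissible R n x2 /\ ~ equivG R x1 x2 /\
       eqDD R (psi R x1) (u, v) /\ eqDD R (psi R x2) (u, v) /\
       (forall y, admissible R n y -> eqDD R (psi R y) (u, v) ->
             equivG R y x1 \/ equivG R y x2)).
Proof.
have eqD0 : forall u : OK, totpos R u -> eqD R (absK R u) u.
  move=> u [hu1 _]; exists 0; rewrite absK_emb ger0_norm ?(ltW hu1) //.
  by rewrite mulr0 P0 mul1r.
split; first exact: part1.
split; first by move=> x y _ _; exact: part2.
split.
  move=> u v [hu hNu] [hv hNv]; exists (u, v); split; first exact: adm_intro.
  by split; apply: eqD0.
move=> u v [hu hNu] [hv hNv].
set w : OK := (3 * v.1 + 4 * v.2, 2 * v.1 + 3 * v.2).
have hP2 : epsR R ^ 2 != 0 by rewrite gt_eqF // Pgt0.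
have hw1 : emb R w = epsR R ^ 2 * emb R v.
  rewrite /emb /w /= /epsR; ring: (s2sq R).
have hw2 : emb R (sigmaK w) = epsR R ^ (-2) * emb R (sigmaK v).
  apply: (mulfI hP2); rewrite mulrA -PD addrN P0 mul1r.
  rewrite /emb /w /sigmaK /= /epsR; ring: (s2sq R).
case: (hu) => hu1 hu2; case: (hv) => hv1 hv2.
have hwpos : totpos R w by split; rewrite ?hw1 ?hw2 mulr_gt0 // Pgt0.
have hNw : emb R w * emb R (sigmaK w) = n%:R.
  rewrite hw1 hw2 -hNv; transitivity ((epsR R ^ (-2) * epsR R ^ 2) * (emb R v * emb R (sigmaK v)));
    first ring.
  by rewrite PN mul1r.
exists (u, v), (u, w); split; first exact: adm_intro.
split; first exact: adm_intro.
split.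
  case=> j [k [s]]; rewrite hGh mx2_scale /gam /= => /mx2_inj [h1 h2 _ _].
  case: s h1 h2 => /= h1 h2.
    have := mulr_gt0 (mulr_gt0 (Pgt0 _ (2 * j)) hu1) (Pgt0 _ (2 * k)).
    move=> hpos; rewrite expr1 mulN1r in h1.
    by rewrite h1 oppr_gt0 ltNge (ltW hpos) in hu1.
  rewrite expr0 mul1r in h1; rewrite expr0 mul1r in h2.
  have e1 : 2 * j + 2 * k = 0.
    apply: Pinj; apply: (mulIf (_ : emb R u != 0)); first by rewrite gt_eqF.
    by rewrite PD P0 mul1r {2}h1; ring.
  have e2 : 2 = 2 * j + - (2 * k).
    apply: Pinj; apply: (mulIf (_ : s5 R * emb R v != 0)).
      by rewrite gt_eqF // mulr_gt0 // s5gt0.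
    rewrite (PD _ (2 * j)); transitivity (s5 R * emb R w); first by rewrite hw1; ring.
    by rewrite h2; ring.
  exact: intc e1 e2.
split; first by split; apply: eqD0.
split.
  split; first exact: eqD0.
  exists 1; rewrite absK_emb ger0_norm ?hw1 //; case: hwpos => hw _.
  by rewrite -hw1 ltW.
move=> y hy [[a ha] [b hb]]; rewrite /= !absK_emb in ha hb.
have [hN1 [hN2 hs]] := @adm_facts R n y hy.
have [s [h1 h3]] : exists s : bool, emb R y.1 = (-1) ^+ s * epsR R ^ (2 * a) * emb R u /\
    emb R y.2 = (-1) ^+ s * epsR R ^ (2 * b) * emb R v.
  case: hs => [[p1 [p2 [p3 p4]]]|[p1 [p2 [p3 p4]]]].
    exists false; rewrite expr0 !mul1r.
    by rewrite (ger0_norm (ltW p1)) in ha; rewrite (ger0_norm (ltW p3)) in hb.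
  exists true; rewrite expr1 !mulN1r !mulNr.
  rewrite (ltr0_norm p1) in ha; rewrite (ltr0_norm p3) in hb.
  by rewrite -ha -hb !opprK.
have h2 := @conj_rel R y.1 u s _ (etrans hN1 (esym hNu)) h1 (negbT (gt_eqF hu1)).
have h4 := @conj_rel R y.2 v s _ (etrans hN2 (esym hNv)) h3 (negbT (gt_eqF hv1)).
have [m [hm|hm]] := par (a - b).
  by left; apply: (@equiv_of R y (u, v) s a b m h1 h2 h3 h4 hm).
have e3 := Psh1 R b.
have e4 := Psh2 R b.
have h3' : emb R y.2 = (-1) ^+ s * epsR R ^ (2 * (b - 1)) * emb R w.
  by rewrite h3 hw1 e3; ring.
have h4' : emb R (sigmaK y.2) = (-1) ^+ s * epsR R ^ (- (2 * (b - 1))) * emb R (sigmaK w).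
  by rewrite h4 hw2 e4; ring.
have hm' := @intsh a b m hm.
right; exact: (@equiv_of R y (u, w) s a (b - 1) (m + 1) h1 h2 h3' h4' hm').
Qed.
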